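(* Consider the algorithm described in the context, where $\psi$ can be truncated, and assume that the iterates are bounded (there is $R>0$ with $\{x^k\}\subseteq B_R(0)$). Let $\tilde x^k$ denote the point before the truncation step of iteration $k$ and $x^{k+1}$ the point after it. Then $$\sum_{k=0}^\infty\|x^{k+1}-\tilde x^k\|\le m\kappa\sum_{i=0}^\infty\epsilon_i<\infty\quad\text{and}\quad\sum_{k=0}^\infty|\psi(x^{k+1})-\psi(\tilde x^k)|<\infty.$$
   Context: Problem: minimize $\psi=f+\varphi$ where $f:\mathbb{R}^n\to\mathbb{R}$ is continuously differentiable and $\varphi:\mathbb{R}^n\to\mathbb{R}$ is convex. Notation: $\|\cdot\|$ Euclidean norm, $B_r(x)$ open ball, $\bar v=v/\|v\|$, $\psi'(x;d)$ directional derivative, $\partial\psi(x)=\nabla f(x)+\partial\varphi(x)$; $x$ is stationary if $0\in\partial\psi(x)$. Pseudo-gradient: $g(x)=u(x)d(x)$ where, for non-stationary $x$, $\|d(x)\|=1$, $\psi'(x;d(x))<0$, $u(x)\in[\psi'(x;d(x)),0)$, and for stationary $x$, $d(x)=0$, $u(x)=0$. Safeguards: for $\|d\|=1$, $\Gamma_{\max}(x,d)=\sup\{T>0: t\mapsto\psi(x+td)\text{ is } C^1\text{ on }(0,T)\}$, $\Gamma(x)=\inf_{\|d\|=1}\Gamma_{\max}(x,d)$; a stepsize safeguard $(x,d)\mapsto\Gamma(x,d)\in(0,\infty]$ is fixed. Truncation: $\psi$ can be truncated with data $\mathbb{R}^n=S_0\supset\cdots\supset S_m$, $\delta\in(0,\infty]$,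 $\kappa>0$, $T:\mathbb{R}^n\times(0,\delta]\to\mathbb{R}^n$ meaning (i) $\Gamma(x)\ge\delta$ on $S_m$; (ii) for $a\in(0,\delta]$, $x\in S_i\setminus S_{i+1}$, $i<m$: if $\Gamma(x)\ge a$ then $T(x,a)=x$, else $T(x,a)\in S_{i+1}$, $\Gamma(T(x,a))\ge a$, $\|T(x,a)-x\|\le\kappa a$. Put $S_{m+1}=\emptyset$. Algorithm: parameters $0<\eta<\eta_1<\eta_2<1$, $0<r_1<1<r_2$, $\Delta_{\max}>0$, $\gamma_1,\gamma_2>0$, a positive strictly decreasing summable sequence $(\epsilon_s)$ with $\epsilon_s\le\delta$, a nonincreasing $\ell:(0,\infty)\to[0,\frac12]$ with $\ell(\Delta)\to0$ as $\Delta\to0^+$; start $x^0$, $\Delta_0>0$, counters $c_0=\dots=c_m=0$. Iteration $k$: $g^k=g(x^k)$; stop if $g^k=0$. Choose $B^k\in\mathbb{R}^{n\times n}$, model $m_k(s)=\psi(x^k)+\langle g^k,s\rangle+\frac12\langle s,B^ks\rangle$, Cauchy point $s^k_C=-\alpha^C_kg^k$ with $\alpha^C_k\in\arg\min_{0\le t\le\Delta_k/\|g^k\|}m_k(-tg^k)$. Choose $s^k$, $\|s^k\|\le\Delta_k$, with $m_k(0)-m_k(s^k)\ge\frac{\gamma_1}{2}\|g^k\|\min\{\Delta_k,\gamma_2\|g^k\|\}$ and $m_k(0)-m_k(s^k)\ge(1-\ell(\|s^k\|))(m_k(0)-m_k(s^k_C))$. Let $\rho^1_k=\frac{\psi(x^k)-\psi(x^k+s^k)}{m_k(0)-m_k(s^k)}$.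 If $\rho^1_k\ge\eta_1$: $\tilde x^k=x^k+s^k$, $\Delta_{k+1}=\min\{\Delta_{\max},r_2\Delta_k\}$ if $\rho^1_k>\eta_2$ and $\Delta_{k+1}=\Delta_k$ otherwise. Otherwise: $\alpha_k=\min\{\Gamma(x^k,\bar s^k),\|s^k\|\}$; if $m_k(0)-m_k(\alpha_k\bar s^k)<\frac{\alpha_k}{2\|s^k\|}(m_k(0)-m_k(s^k))$, replace $s^k$ by $s^k_C$ and $\alpha_k=\min\{\Gamma(x^k,\bar s^k_C),\|s^k_C\|\}$; $\rho^2_k=\frac{\psi(x^k)-\psi(x^k+\alpha_k\bar s^k)}{m_k(0)-m_k(\alpha_k\bar s^k)}$; $\Delta_{k+1}=r_1\Delta_k$ if $\rho^2_k<\eta_1$, $=\min\{\Delta_{\max},r_2\Delta_k\}$ if $\rho^2_k>\eta_2$, $=\Delta_k$ otherwise; $\tilde x^k=x^k+\alpha_k\bar s^k$ if $\rho^2_k\ge\eta$ and $\tilde x^k=x^k$ otherwise. Truncation step: set $\tilde x=\tilde x^k$ and repeat {find $i$ with $\tilde x\in S_i\setminus S_{i+1}$; if $\Gamma(\tilde x)<\epsilon_{c_i}$ set $\tilde x\leftarrow T(\tilde x,\epsilon_{c_i})$, $c_i\leftarrow c_i+1$; else stop}; $x^{k+1}=\tilde x$. *)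

(* Defs.v *)
From HB Require Import structures.
From mathcomp Require Import all_boot all_order all_algebra.
From mathcomp Require Import all_classical all_reals all_analysis.
Set Implicit Arguments. Unset Strict Implicit. Unset Printing Implicit Defensive.
Import Order.TTheory GRing.Theory Num.Theory.
Import numFieldNormedType.Exports.
Local Open Scope classical_set_scope.
Local Open Scope ring_scope.

Section Defs.
Variables (R : realType) (n : nat).
Notation vec := 'rV[R]_n.

Definition dot (u v : vec) : R := \sum_(i < n) u ord0 i * v ord0 i.
Definition enorm (v : vec) : R := Num.sqrt (dot v v).
Definition nrm (v : vec) : vec := (enorm v)^-1 *: v.
Definition qform (B : 'M[R]_n) (s : vec) : R :=
  \sum_(i < n) \sum_(j < n) s ord0 i * B i j * s ord0 j.

Definition has_gradient (f : vec -> R) (gradf : vec -> vec) : Prop :=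
  forall x : vec,
    (fun h : vec => (f (x + h) - f x - dot (gradf x) h) / enorm h) @ (0 : vec)^' --> (0 : R).

Definition convex_fun (phi : vec -> R) : Prop :=
  forall (x y : vec) (t : R), 0 <= t <= 1 ->
    phi (t *: x + (1 - t) *: y) <= t * phi x + (1 - t) * phi y.

Definition subdiff (phi : vec -> R) (x : vec) : set vec :=
  [set v | forall y : vec, phi x + dot v (y - x) <= phi y].

Definition stationary (gradf : vec -> vec) (phi : vec -> R) (x : vec) : Prop :=
  exists2 v, subdiff phi x v & gradf x + v = 0.

Definition dirder (psi : vec -> R) (x d : vec) : R :=
  lim ((fun t : R => (psi (x + t *: d) - psi x) / t) @ 0^'+).

Definition pseudo_gradient (gradf : vec -> vec) (phi : vec -> R)
    (psi : vec -> R) (u : vec -> R) (d : vec -> vec) : Prop :=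
  forall x : vec,
    (~ stationary gradf phi x ->
       enorm (d x) = 1 /\ dirder psi x (d x) < 0 /\
       dirder psi x (d x) <= u x /\ u x < 0) /\
    (stationary gradf phi x -> d x = 0 /\ u x = 0).

Definition pgrad (u : vec -> R) (d : vec -> vec) (x : vec) : vec := u x *: d x.

Definition C1_on (h : R -> R) (a b : R) : Prop :=
  (forall t, a < t < b -> derivable h t 1) /\
  {within `]a, b[, continuous (derive1 h)}.

Definition Gamma_max (psi : vec -> R) (x d : vec) : \bar R :=
  ereal_sup [set T%:E | T in [set T : R | 0 < T /\
               C1_on (fun t => psi (x + t *: d)) 0 T]].

Definition Gamma (psi : vec -> R) (x : vec) : \bar R :=
  ereal_inf [set Gamma_max psi x d | d in [set d : vec | enorm d = 1]].

Definition layerS (S : nat -> set vec) (m i : nat) : set vec :=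
  if (i <= m)%N then S i else set0.

Definition in_layer (S : nat -> set vec) (m i : nat) (x : vec) : Prop :=
  (i <= m)%N /\ layerS S m i x /\ ~ layerS S m i.+1 x.

Definition truncatable (psi : vec -> R) (m : nat) (S : nat -> set vec)
    (delta : \bar R) (kappa : R) (T : vec -> R -> vec) : Prop :=
  [/\ S 0%N = setT,
      (forall i, (i < m)%N -> S i.+1 `<=` S i),
      (0 < delta)%E /\ 0 < kappa,
      (forall x, S m x -> (delta <= Gamma psi x)%E) &
      (forall (a : R) (i : nat) (x : vec), 0 < a -> (a%:E <= delta)%E ->
         (i < m)%N -> S i x -> ~ S i.+1 x ->
         ((a%:E <= Gamma psi x)%E -> T x a = x) /\
         ((Gamma psi x < a%:E)%E ->
            [/\ S i.+1 (T x a), (a%:E <= Gamma psi (T x a))%E &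
                enorm (T x a - x) <= kappa * a]))].

Definition incr (c : nat -> nat) (i : nat) : nat -> nat :=
  fun j => if j == i then (c j).+1 else c j.

(* The truncation loop: trunc_loop x c x' c' means that starting from
   tilde x = x with counters c, the loop ends at x' with counters c'. *)
Inductive trunc_loop (psi : vec -> R) (m : nat) (S : nat -> set vec)
    (T : vec -> R -> vec) (eps : nat -> R) :
    vec -> (nat -> nat) -> vec -> (nat -> nat) -> Prop :=
| TL_stop x c i :
    in_layer S m i x -> ~ (Gamma psi x < (eps (c i))%:E)%E ->
    trunc_loop psi m S T eps x c x c
| TL_step x c i x' c' :
    in_layer S m i x -> (Gamma psi x < (eps (c i))%:E)%E ->
    trunc_loop psi m S T eps (T x (eps (c i))) (incr c i) x' c' ->
    trunc_loop psi m S T eps x c x' c'.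

Definition eminr (a : \bar R) (b : R) : R := fine (Order.min a b%:E).

(* One iteration k of the algorithm:
   state (x, Delta, c) |-> (tilde x, x', Delta', c').
   If g(x) = 0 the algorithm stops; we then pad with constant iterates. *)
Definition alg_step (psi : vec -> R) (u : vec -> R) (d : vec -> vec)
    (Gs : vec -> vec -> \bar R) (m : nat) (S : nat -> set vec)
    (T : vec -> R -> vec) (eps : nat -> R) (ell : R -> R)
    (eta eta1 eta2 r1 r2 Dmax gam1 gam2 : R)
    (x : vec) (D : R) (c : nat -> nat)
    (xt x' : vec) (D' : R) (c' : nat -> nat) : Prop :=
  let g := pgrad u d x in
  if g == 0 then [/\ xt = x, x' = x, D' = D & c' = c] else
  exists (B : 'M[R]_n) (aC : R) (s : vec),
    let mk := fun s : vec => psi x + dot g s + 2^-1 * qform B s in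
    let sC := (- aC) *: g in
    [/\
        0 <= aC <= D / enorm g /\
        (forall t, 0 <= t <= D / enorm g -> mk (- aC *: g) <= mk (- t *: g)),
        enorm s <= D /\
        mk 0 - mk s >= gam1 / 2 * enorm g * Order.min D (gam2 * enorm g) /\
        mk 0 - mk s >= (1 - ell (enorm s)) * (mk 0 - mk sC),
        (let rho1 := (psi x - psi (x + s)) / (mk 0 - mk s) in
         if eta1 <= rho1 then
           xt = x + s /\
           D' = (if eta2 < rho1 then Order.min Dmax (r2 * D) else D)
         else
           let a0 := eminr (Gs x (nrm s)) (enorm s) in
           let replace := mk 0 - mk (a0 *: nrm s) < a0 / (2 * enorm s) * (mk 0 - mk s) in
           let s2 := if replace then sC else s in
           let a := if replace then eminr (Gs x (nrm sC)) (enorm sC) else a0 in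
           let rho2 := (psi x - psi (x + a *: nrm s2)) / (mk 0 - mk (a *: nrm s2)) in
           D' = (if rho2 < eta1 then r1 * D
                 else if eta2 < rho2 then Order.min Dmax (r2 * D) else D) /\
           xt = (if eta <= rho2 then x + a *: nrm s2 else x))
      &
        trunc_loop psi m S T eps xt c x' c'].

End Defs.

(* Main.v *)
Require Import Defs.
From HB Require Import structures.
From mathcomp Require Import all_boot all_order all_algebra.
From mathcomp Require Import all_classical all_reals all_analysis.
From mathcomp Require Import ring lra.
Import Order.TTheory GRing.Theory Num.Theory.
Import numFieldNormedType.Exports.
Local Open Scope classical_set_scope.
Local Open Scope ring_scope.

Section Enorm.
Variables (R : realType) (n : nat).
Notation vec := 'rV[R]_n.
Implicit Types u v w : vec.

Lemma dotC u v : dot u v = dot v u.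
Proof. by rewrite /dot; apply: eq_bigr => i _; rewrite mulrC. Qed.

Lemma dotDl u v w : dot (u + v) w = dot u w + dot v w.
Proof. by rewrite /dot -big_split; apply: eq_bigr => i _; rewrite !mxE mulrDl. Qed.

Lemma dotZl a u v : dot (a *: u) v = a * dot u v.
Proof. by rewrite /dot mulr_sumr; apply: eq_bigr => i _; rewrite !mxE mulrA. Qed.

Lemma dotNl u v : dot (- u) v = - dot u v.
Proof. by rewrite -scaleN1r dotZl mulN1r. Qed.

Lemma dotBl u v w : dot (u - v) w = dot u w - dot v w.
Proof. by rewrite dotDl dotNl. Qed.

Lemma dotDr u v w : dot w (u + v) = dot w u + dot w v.
Proof. by rewrite dotC dotDl !(dotC w). Qed.

Lemma dotZr a u v : dot v (a *: u) = a * dot v u.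
Proof. by rewrite dotC dotZl dotC. Qed.

Lemma dotBr u v w : dot w (u - v) = dot w u - dot w v.
Proof. by rewrite dotC dotBl !(dotC w). Qed.

Lemma dot0r u : dot 0 u = 0.
Proof. by rewrite -(scale0r 0) dotZl mul0r. Qed.

Lemma dot0l u : dot u 0 = 0.
Proof. by rewrite dotC dot0r. Qed.

Lemma dot_ge0_aux v j : 0 <= v ord0 j * v ord0 j.
Proof. by rewrite -expr2 sqr_ge0. Qed.

Lemma dot_ge0 v : 0 <= dot v v.
Proof. by rewrite /dot sumr_ge0 // => i _; rewrite -expr2 sqr_ge0. Qed.

Lemma dot_eq0 v : dot v v = 0 -> v = 0.
Proof.
move=> h; apply/rowP => i; rewrite mxE.
have /eqP := psumr_eq0P (P := xpredT) (fun j _ => (dot_ge0_aux v j)) h (i:=i) isT.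
by rewrite mulf_eq0 orbb ord1 => /eqP.
Qed.

Lemma enorm_ge0 v : 0 <= enorm v.
Proof. exact: sqrtr_ge0. Qed.

Lemma enorm_sq v : enorm v ^+ 2 = dot v v.
Proof. by rewrite sqr_sqrtr // dot_ge0. Qed.

Lemma enormZ a v : enorm (a *: v) = `|a| * enorm v.
Proof. by rewrite /enorm dotZl dotZr mulrA -expr2 sqrtrM ?sqr_ge0 // sqrtr_sqr. Qed.

Lemma enorm0 : enorm (0 : vec) = 0.
Proof. by rewrite /enorm dot0r sqrtr0. Qed.

Lemma enormN v : enorm (- v) = enorm v.
Proof. by rewrite -scaleN1r enormZ normrN normr1 mul1r. Qed.

Lemma enormB v w : enorm (v - w) = enorm (w - v).
Proof. by rewrite -enormN opprB. Qed.

Lemma enorm_eq0 v : enorm v = 0 -> v = 0.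
Proof.
move=> /eqP; rewrite sqrtr_eq0 => h; apply: dot_eq0.
by apply/eqP; rewrite eq_le h dot_ge0.
Qed.

Lemma CS u v : `|dot u v| <= enorm u * enorm v.
Proof.
have [v0|vn0] := eqVneq (dot v v) 0.
  by rewrite (dot_eq0 _ v0) dot0l normr0 mulr_ge0 // enorm_ge0.
set a := dot v v; set b := dot u v.
have a0 : 0 < a by rewrite lt_def vn0 dot_ge0.
have h := dot_ge0 (a *: u - b *: v).
rewrite !(dotBl, dotBr, dotZl, dotZr) -/a -/b (dotC v u) -/b in h.
have h2 : b ^+ 2 <= dot u u * a.
  have : 0 <= a * (a * dot u u - b ^+ 2) by nra.
  by rewrite pmulr_rge0 // subr_ge0 mulrC.
rewrite -ler_sqr ?nnegrE ?mulr_ge0 ?enorm_ge0 //.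
by rewrite real_normK ?num_real // exprMn !enorm_sq.
Qed.

Lemma enormD u v : enorm (u + v) <= enorm u + enorm v.
Proof.
rewrite -ler_sqr ?nnegrE ?addr_ge0 ?enorm_ge0 //.
rewrite enorm_sq !(dotDl, dotDr) sqrrD !enorm_sq (dotC v u).
have := CS u v; have := ler_norm (dot u v); nra.
Qed.

Lemma coord_le v i : `|v ord0 i| <= enorm v.
Proof.
rewrite -sqrtr_sqr ler_sqrt ?dot_ge0 // /dot (bigD1 i) //= expr2 lerDl.
by rewrite sumr_ge0 // => j _; exact: dot_ge0_aux.
Qed.

Lemma mxnorm_le v : `|v| <= enorm v.
Proof.
rewrite [leLHS]/Num.norm /= mx_normrE.
apply: bigmax_le; first exact: enorm_ge0.
by move=> [i j] _ /=; rewrite ord1; exact: coord_le.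
Qed.

Lemma coord_le_mx v i : `|v ord0 i| <= `|v|.
Proof.
have /mapP[j Hj ->] : `|v ord0 i| \in [seq `|v x.1 x.2| | x : 'I_1 * 'I_n].
  by apply/mapP; exists (ord0, i) => //=; rewrite mem_enum.
by rewrite [leRHS]/Num.norm /= mx_normrE; apply/bigmax_geP; right => /=; exists j.
Qed.

Lemma enorm_le_mx v : enorm v <= Num.sqrt n%:R * `|v|.
Proof.
rewrite -(ger0_norm (normr_ge0 v)) -sqrtr_sqr -sqrtrM // ler_sqrt; last first.
  by rewrite mulr_ge0 // sqr_ge0.
rewrite /dot.
apply: (le_trans (y := \sum_(i < n) `|v|^+2)).
  apply: ler_sum => i _; rewrite -expr2 -real_normK ?num_real //.
  by rewrite ler_sqr ?nnegrE ?normr_ge0 // coord_le_mx.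
by rewrite sumr_const card_ord mulr_natl.
Qed.

Lemma jensen (phi : vec -> R) : convex_fun phi -> forall k (lam : 'I_k -> R) (z : 'I_k -> vec),
  (forall j, 0 <= lam j) -> \sum_j lam j = 1 ->
  phi (\sum_j lam j *: z j) <= \sum_j lam j * phi (z j).
Proof.
move=> cvx; elim=> [|k IH] lam z l0 l1.
  by move: l1; rewrite big_ord0 => /eqP; rewrite eq_sym oner_eq0.
move: l1; rewrite !big_ord_recl => l1.
have s0 : 0 <= \sum_(j < k) lam (lift ord0 j) by apply: sumr_ge0 => j _.
have a1 : lam ord0 <= 1 by lra.
have a0 := l0 ord0.
have [a_eq1 | a_neq1] := eqVneq (lam ord0) 1.
  have s'0 : \sum_(j < k) lam (lift ord0 j) = 0 by lra.
  have l'0 j : lam (lift ord0 j) = 0.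
    exact: (psumr_eq0P (P := xpredT) (fun j _ => l0 (lift ord0 j)) s'0 (i := j) isT).
  rewrite big1 ?[in X in _ <= X]big1 ?a_eq1 ?scale1r ?mul1r ?addr0 //.
    by move=> j _; rewrite l'0 mul0r.
  by move=> j _; rewrite l'0 scale0r.
have t0 : 0 < 1 - lam ord0 by rewrite subr_gt0 lt_neqAle a_neq1 a1.
have tn0 : 1 - lam ord0 != 0 by rewrite gt_eqF.
pose mu := fun j : 'I_k => lam (lift ord0 j) / (1 - lam ord0).
have IHm := IH mu (fun j => z (lift ord0 j)) (fun j => divr_ge0 (l0 _) (ltW t0)).
have s1 : \sum_j mu j = 1.
  rewrite -mulr_suml (_ : \sum_(j < k) _ = 1 - lam ord0) ?divff //; lra.
have E1 : \sum_(j<k) lam (lift ord0 j) *: z (lift ord0 j) =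
    (1 - lam ord0) *: \sum_j mu j *: z (lift ord0 j).
  by rewrite scaler_sumr; apply: eq_bigr => j _; rewrite scalerA /mu mulrC divfK.
have E2 : \sum_(j<k) lam (lift ord0 j) * phi (z (lift ord0 j)) =
    (1 - lam ord0) * \sum_j mu j * phi (z (lift ord0 j)).
  by rewrite mulr_sumr; apply: eq_bigr => j _; rewrite mulrA /mu (mulrC (1 - _)) divfK.
rewrite E1 E2.
apply: le_trans (cvx _ _ (lam ord0) _) _; first by rewrite a0 a1.
by rewrite lerD2l ler_wpM2l ?(ltW t0) // IHm.
Qed.

Lemma vec_n0 (n0 : n = 0%N) (y : vec) : y = 0.
Proof. by apply/rowP => i; have := ltn_ord i; rewrite {2}n0. Qed.

Lemma convex_ub (phi : vec -> R) : convex_fun phi -> forall r, 0 < r ->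
  exists U, forall y, enorm y <= r -> phi y <= U.
Proof.
move=> cvx r r0.
have [n0|n_gt0] := posnP n.
  by exists (phi 0) => y _; rewrite (vec_n0 n0 y).
pose N : R := n%:R.
have N0 : 0 < N by rewrite ltr0n.
pose A j := phi ((N * r) *: 'e_j : vec).
pose B j := phi ((- (N * r)) *: 'e_j : vec).
exists (\sum_(j < n) (`|A j| + `|B j|)) => y hy.
have Ey : y = \sum_(j < n) N^-1 *: ((N * y ord0 j) *: 'e_j).
  rewrite {1}(row_sum_delta y); apply: eq_bigr => j _.
  by rewrite scalerA mulrA mulVf ?mul1r // gt_eqF.
rewrite {1}Ey; apply: le_trans (@jensen phi cvx n (fun _ => N^-1) (fun j : 'I_n => (N * y ord0 j) *: 'e_j : vec) _ _) _.
- by move=> j; rewrite invr_ge0 ltW.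
- by rewrite sumr_const card_ord -mulr_natr mulVf // gt_eqF.
apply: ler_sum => j _.
have hj := coord_le y j.
have hyj : - r <= y ord0 j <= r by rewrite -ler_norml (le_trans hj).
pose q := y ord0 j / r.
have qr : q * r = y ord0 j by rewrite /q divfK // gt_eqF.
pose s := (1 + q) / 2.
have s01 : 0 <= s <= 1.
  apply/andP; split; rewrite /s; nra.
have E : (N * y ord0 j) *: ('e_j : vec) =
   s *: ((N * r) *: 'e_j) + (1 - s) *: ((- (N * r)) *: 'e_j).
  by rewrite !scalerA -scalerDl; congr (_ *: _); rewrite -qr /s; field.
rewrite E.
have h1 := cvx ((N * r) *: 'e_j) ((- (N * r)) *: 'e_j) s s01.
have hA := ler_norm (A j); have hB := ler_norm (B j).
have Ni : N^-1 <= 1 by rewrite invf_le1 // ler1n.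
have Ni0 : 0 <= N^-1 by rewrite invr_ge0 ltW.
rewrite -/(A j) -/(B j) in h1.
have hAB : phi (s *: ((N * r) *: 'e_j) + (1 - s) *: ((- (N * r)) *: 'e_j))
   <= `|A j| + `|B j|.
  apply: le_trans h1 _.
  have := normr_ge0 (A j); have := normr_ge0 (B j).
  move: s01 => /andP[? ?]; nra.
have := normr_ge0 (A j); have := normr_ge0 (B j).
nra.
Qed.

Lemma convex_lip (phi : vec -> R) : convex_fun phi -> forall M, 0 < M ->
  exists L, 0 <= L /\ forall y z, enorm y <= M -> enorm z <= M ->
    `|phi z - phi y| <= L * enorm (z - y).
Proof.
move=> cvx M M0.
have M2 : 0 < 2 * M by rewrite mulr_gt0.
have [U hU] := @convex_ub phi cvx _ M2.
pose L0 := 2 * phi 0 - U.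
have hL y : enorm y <= 2 * M -> L0 <= phi y.
  move=> hy; have h01 : 0 <= (2^-1 : R) <= 1 by apply/andP; split; lra.
  have := cvx y (- y) (2^-1) h01.
  have -> : 2^-1 *: y + (1 - 2^-1) *: - y = 0.
    by apply/rowP => j; rewrite !mxE; field.
  have := hU (- y); rewrite enormN => /(_ hy); rewrite /L0; lra.
have hU0 : phi 0 <= U by apply: hU; rewrite enorm0 mulr_ge0 // ltW.
have key y z : enorm y <= M -> enorm z <= M ->
    phi z - phi y <= (U - L0) / M * enorm (z - y).
  move=> hy hz.
  have [zy|zny] := eqVneq z y; first by rewrite zy !subrr enorm0 mulr0.
  set d := enorm (z - y).
  have d0 : 0 < d.
    rewrite lt_def enorm_ge0 andbT; apply/eqP => /enorm_eq0 /eqP.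
    by rewrite subr_eq0 (negbTE zny).
  pose w := z + (M / d) *: (z - y).
  have hw : enorm w <= 2 * M.
    apply: le_trans (enormD _ _) _.
    rewrite enormZ ger0_norm; last by rewrite divr_ge0 // ltW.
    rewrite divfK ?gt_eqF //; lra.
  pose t := d / (d + M).
  have Ez : z = t *: w + (1 - t) *: y.
    apply/rowP => j; rewrite /w /t !mxE.
    field; apply/andP; split; rewrite gt_eqF //; lra.
  have t01 : 0 <= t <= 1.
    apply/andP; split; first by rewrite divr_ge0 // ltW //; lra.
    by rewrite ler_pdivrMr; lra.
  have h1 := cvx w y t t01; rewrite -Ez in h1.
  have t0 : 0 <= t by case/andP: t01.
  have tdm : t * (d + M) = d by rewrite /t divfK // gt_eqF //; lra.
  have tM : t <= d / M by rewrite ler_pdivlMr //; nra.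
  have hw1 := hU w hw.
  have hy1 := hL y ltac:(lra).
  have hUL : 0 <= U - L0 by rewrite /L0; lra.
  apply: le_trans (_ : t * (U - L0) <= _).
    nra.
  have -> : (U - L0) / M * d = d / M * (U - L0) by field; rewrite gt_eqF.
  exact: ler_wpM2r.
exists ((U - L0) / M); split.
  by apply: divr_ge0; [rewrite /L0; lra | exact: ltW].
move=> y z hy hz; rewrite ler_norml; apply/andP; split.
  by rewrite lerNl opprB enormB key.
exact: key.
Qed.

Lemma grad_bound (gradf : vec -> vec) : continuous gradf -> forall M, 0 < M ->
  exists G, 0 <= G /\ forall p, enorm p <= M -> enorm (gradf p) <= G.
Proof.
move=> gc M M0.
pose A := closed_ball (0 : vec) M.
have Ab : bounded_set A.
  exists M; split; first exact: num_real.
  move=> B MB x; rewrite /A closed_ballE // /closed_ball_ /= sub0r normrN => hx.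
  by apply: le_trans hx (ltW MB).
have Ac : compact A by apply: bounded_closed_compact => //; exact: closed_ball_closed.
have Kc : compact (gradf @` A).
  by apply: continuous_compact => //; exact: continuous_subspaceT.
have [G0 [_ HG]] := compact_bounded Kc.
have G1 : G0 < `|G0| + 1 by rewrite (le_lt_trans (ler_norm G0)) // ltrDl.
have HG1 := HG (`|G0| + 1) G1.
exists (Num.sqrt n%:R * (`|G0| + 1)); split.
  by rewrite mulr_ge0 ?sqrtr_ge0 // addr_ge0.
move=> p hp.
apply: le_trans (enorm_le_mx _) _.
rewrite ler_wpM2l ?sqrtr_ge0 //; apply: HG1; exists p => //.
rewrite /A closed_ballE // /closed_ball_ /= sub0r normrN.
exact: le_trans (mxnorm_le p) hp.
Qed.

Lemma near_scale (P : vec -> Prop) v : v != 0 ->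
  (\forall w \near (0 : vec)^', P w) -> \forall h \near (0 : R)^', P (h *: v).
Proof.
move=> vn0 H.
have H' : nbhs (0 *: v) (fun w => w != 0 -> P w) by rewrite scale0r; exact: H.
have hh := (@scalel_continuous R _ v 0) _ H'.
near=> h.
have hn0 : h != 0 by near: h; exact: nbhs_dnbhs_neq.
have : h *: v != 0 -> P (h *: v) by near: h; apply: cvg_within; exact: hh.
by apply; rewrite scaler_eq0 negb_or hn0.
Unshelve. all: by end_near.
Qed.

Lemma grad_dir (f : vec -> R) gradf : has_gradient f gradf -> forall p v,
  (fun h : R => h^-1 * (f (p + h *: v) - f p)) @ (0 : R)^' --> dot (gradf p) v.
Proof.
move=> hg p v.
have [->|vn0] := eqVneq v 0.
  rewrite dot0l.
  have -> : (fun h : R => h^-1 * (f (p + h *: 0) - f p)) = fun=> 0.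
    by apply: funext => h; rewrite scaler0 addr0 subrr mulr0.
  exact: cvg_cst.
set ev := enorm v.
have ev0 : 0 < ev.
  rewrite lt_def enorm_ge0 andbT; apply/eqP => /enorm_eq0 /eqP.
  by rewrite (negbTE vn0).
apply/cvgrPdist_lt => e e0.
have := hg p; move/cvgrPdist_lt => /(_ (e / ev)) H.
have := @near_scale _ v vn0 (H (divr_gt0 e0 ev0)).
move=> Hs.
near=> h.
have hn0 : h != 0 by near: h; exact: nbhs_dnbhs_neq.
have := hn0; near: h; apply: filterS Hs => h /= Hh hn0.
move: Hh.
set q := gradf p.
set N := f (p + h *: v) - f p - h * dot q v.
rewrite sub0r normrN dotZr -/N enormZ -/ev.
have -> : dot q v - h^-1 * (f (p + h *: v) - f p) = - (N / h).
  by rewrite /N; field.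
rewrite normrN !normrM !normfV normrM normr_id (ger0_norm (ltW ev0)) invfM mulrA.
by rewrite ltr_pM2r ?invr_gt0.
Unshelve. all: by end_near.
Qed.

Lemma C1_lip (f : vec -> R) gradf : has_gradient f gradf -> continuous gradf ->
  forall M, 0 < M -> exists L, 0 <= L /\ forall y z, enorm y <= M -> enorm z <= M ->
    `|f z - f y| <= L * enorm (z - y).
Proof.
move=> hg gc M M0.
have [G [G0 hG]] := @grad_bound gradf gc M M0.
exists G; split => // y z hy hz.
set v := z - y.
pose g := fun t : R => f (y + t *: v).
have der (t : R) : is_derive t (1 : R) g (dot (gradf (y + t *: v)) v).
  have C := @grad_dir f gradf hg (y + t *: v) v.
  have E : (fun h : R => h^-1 *: ((g \o shift t) (h *: 1) - g t)) =
           (fun h : R => h^-1 * (f ((y + t *: v) + h *: v) - f (y + t *: v))).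
    apply: funext => h; rewrite /g /=.
    have -> : h%:A = h :> R by rewrite /GRing.scale /= mulr1.
    rewrite scalerDl addrA (addrAC y).
    by [].
  apply: DeriveDef.
    by rewrite /derivable E; apply: cvgP C.
  by rewrite /derive E; apply: cvg_lim C.
have gc01 : {within `[0, 1], continuous g}.
  apply: continuous_subspaceT => t.
  apply: differentiable_continuous; apply/derivable1_diffP.
  by case: (der t).
have [c c01 Ec] := @MVT R g (fun t => dot (gradf (y + t *: v)) v) 0 1 ltr01
   (fun t _ => der t) gc01.
move: Ec; rewrite /g scale1r scale0r addr0 /v (addrC y) subrK subr0 mulr1 => ->.
apply: le_trans (CS _ _) _.
rewrite ler_wpM2r ?enorm_ge0 // hG //.
have [c0 c1] : 0 < c /\ c < 1 by move: c01; rewrite in_itv /= => /andP.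
have -> : y + c *: (z - y) = (1 - c) *: y + c *: z.
  by apply/rowP => j; rewrite !mxE; ring.
apply: le_trans (enormD _ _) _.
rewrite !enormZ !ger0_norm; [|exact: ltW|]; last by rewrite subr_ge0 ltW.
nra.
Qed.

End Enorm.
Set Implicit Arguments. Unset Strict Implicit.
Section Main.
Variables (R : realType) (n : nat).
Notation vec := 'rV[R]_n.

Definition Ssum (eps : nat -> R) k := \sum_(j < k) eps j.
Definition Phi (eps : nat -> R) m (c : nat -> nat) := \sum_(i < m) Ssum eps (c i).

Lemma Phi_incr eps m c i : (i < m)%N ->
  Phi eps m (incr c i) - Phi eps m c = eps (c i).
Proof.
move=> im; rewrite /Phi -sumrB.
rewrite (eq_bigr (fun j : 'I_m => if (j == i :> nat) then eps (c i) else 0)).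
  by rewrite -big_mkcond /= (big_ord1_eq _ (fun _ => eps (c i))) im.
move=> j _; rewrite /incr; case: eqP => [->|_]; last by rewrite subrr.
by rewrite /Ssum big_ord_recr /= addrAC subrr add0r.
Qed.

Lemma loop_bound (psi : vec -> R) m S delta kappa T eps :
  truncatable psi m S delta kappa T -> (forall s, 0 < eps s) ->
  (forall s, ((eps s)%:E <= delta)%E) ->
  forall x c x' c', trunc_loop psi m S T eps x c x' c' ->
  enorm (x' - x) <= kappa * (Phi eps m c' - Phi eps m c).
Proof.
move=> [S0 Sdec [d0 k0] Sm HT] e0 ed x c x' c' hl.
elim: hl => {x c x' c'} [x c i _ _ | x c i x' c' hl hG _ IH].
  by rewrite !subrr enorm0 mulr0.
have [im [hS hnS]] := hl.
have im' : (i < m)%N.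
  rewrite ltn_neqAle im andbT; apply/negP => /eqP ei.
  move: hS; rewrite /layerS ei leqnn => hS.
  have := le_lt_trans (le_trans (ed (c i)) (Sm x hS)) hG.
  by rewrite ltxx.
move: hS hnS; rewrite /layerS (ltnW im') im' => hS hnS.
have [_ HT2] := HT (eps (c i)) i x (e0 _) (ed _) im' hS hnS.
have [_ _ hd] := HT2 hG.
apply: le_trans (_ : enorm (x' - T x (eps (c i))) + enorm (T x (eps (c i)) - x) <= _).
  have -> : x' - x = (x' - T x (eps (c i))) + (T x (eps (c i)) - x).
    by rewrite addrA subrK.
  exact: enormD.
have -> : Phi eps m c' - Phi eps m c =
   (Phi eps m c' - Phi eps m (incr c i)) + (Phi eps m (incr c i) - Phi eps m c).
  by rewrite addrA subrK.
rewrite Phi_incr // mulrDr.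
exact: lerD IH hd.
Qed.

End Main.
Unset Implicit Arguments. Set Strict Implicit.

Theorem lemma4p7 (R : realType) (n : nat)
  (f phi : 'rV[R]_n -> R) (gradf : 'rV[R]_n -> 'rV[R]_n)
  (u : 'rV[R]_n -> R) (d : 'rV[R]_n -> 'rV[R]_n)
  (Gs : 'rV[R]_n -> 'rV[R]_n -> \bar R)
  (m : nat) (S : nat -> set 'rV[R]_n) (delta : \bar R) (kappa : R)
  (T : 'rV[R]_n -> R -> 'rV[R]_n)
  (eta eta1 eta2 r1 r2 Dmax gam1 gam2 : R)
  (eps : nat -> R) (ell : R -> R)
  (x0 : 'rV[R]_n) (D0 : R)
  (x xt : nat -> 'rV[R]_n) (D : nat -> R) (c : nat -> nat -> nat) :
  let psi := fun y => f y + phi y in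
  (* f is C^1 with gradient gradf; phi convex *)
  has_gradient f gradf -> continuous gradf -> convex_fun phi ->
  (* pseudo-gradient and stepsize safeguard *)
  pseudo_gradient gradf phi psi u d ->
  (forall y e, (0 < Gs y e)%E) ->
  (* psi can be truncated *)
  truncatable psi m S delta kappa T ->
  (* parameters *)
  0 < eta -> eta < eta1 -> eta1 < eta2 -> eta2 < 1 ->
  0 < r1 -> r1 < 1 -> 1 < r2 -> 0 < Dmax -> 0 < gam1 -> 0 < gam2 ->
  (forall s, 0 < eps s) -> (forall s, eps s.+1 < eps s) ->
  (\sum_(s <oo) (eps s)%:E < +oo)%E ->
  (forall s, ((eps s)%:E <= delta)%E) ->
  (forall a b, 0 < a -> a <= b -> ell b <= ell a) ->
  (forall a, 0 < a -> 0 <= ell a <= 2^-1) ->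
  ell t @[t --> 0^'+] --> 0 ->
  0 < D0 ->
  (* the run of the algorithm *)
  x 0%N = x0 -> D 0%N = D0 -> c 0%N = (fun _ => 0%N) ->
  (forall k, alg_step psi u d Gs m S T eps ell eta eta1 eta2 r1 r2 Dmax gam1 gam2
               (x k) (D k) (c k) (xt k) (x k.+1) (D k.+1) (c k.+1)) ->
  (* bounded iterates *)
  (exists2 Rb : R, 0 < Rb & forall k, enorm (x k) < Rb) ->
  ((\sum_(k <oo) (enorm (x k.+1 - xt k))%:E
      <= (m%:R * kappa)%:E * \sum_(i <oo) (eps i)%:E)
   /\ \sum_(i <oo) (eps i)%:E < +oo
   /\ \sum_(k <oo) `|psi (x k.+1) - psi (xt k)|%:E < +oo)%E.
Proof.
move=> psi hg gc cvx _ _ htr _ _ _ _ _ _ _ _ _ _ e0 _ eS ed _ _ _ _ _ _ c0 hstep [Rb Rb0 hRb].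
have k0 : 0 < kappa by case: htr => _ _ [].
have step k : enorm (x k.+1 - xt k) <= kappa * (Phi eps m (c k.+1) - Phi eps m (c k)).
  have := hstep k; rewrite /alg_step /=.
  case: ifP => _.
    by case=> -> -> _ ->; rewrite !subrr enorm0 mulr0.
  move=> [B [aC [s H]]]; move: H => /= [_ _ _ hl].
  exact: (@loop_bound R n _ _ _ _ _ _ _ htr e0 ed _ _ _ _ hl).
have eS0 : (0 <= \sum_(i <oo) (eps i)%:E)%E.
  by apply: nneseries_ge0 => i _ _; rewrite lee_fin ltW.
have finE : (\sum_(i <oo) (eps i)%:E)%E \is a fin_num by rewrite ge0_fin_numE.
set E := fine (\sum_(i <oo) (eps i)%:E)%E.
have SsE k : Ssum eps k <= E.
  rewrite -lee_fin /E fineK // /Ssum.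
  have := @nneseries_lim_ge R (fun i => (eps i)%:E) xpredT 0%N k
    (fun i _ _ => ltW (e0 i) : (0 <= (eps i)%:E)%E).
  by rewrite big_mkord sumEFin.
have E0 : 0 <= E by rewrite /E fine_ge0.
have PhiE N : Phi eps m (c N) <= m%:R * E.
  rewrite /Phi; apply: le_trans (_ : \sum_(i < m) E <= _).
    by apply: ler_sum => i _; exact: SsE.
  by rewrite sumr_const card_ord mulr_natl.
set dd := fun k => enorm (x k.+1 - xt k).
have part N : \sum_(k < N) dd k <= kappa * Phi eps m (c N).
  elim: N => [|N IH].
    rewrite big_ord0 c0 /Phi big1 ?mulr0 // => i _.
    by rewrite /Ssum big_ord0.
  rewrite big_ord_recr /=; have := step N; rewrite mulrBr -/(dd N); lra.
set C := m%:R * kappa * E.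
have C0 : 0 <= C by rewrite mulr_ge0 // mulr_ge0 // ltW.
have partC N : \sum_(k < N) dd k <= C.
  apply: le_trans (part N) _; rewrite /C (mulrC _ kappa) -mulrA.
  by rewrite ler_wpM2l ?(ltW k0) ?PhiE.
have dd0 k : 0 <= dd k by exact: enorm_ge0.
have serC : (\sum_(k <oo) (dd k)%:E <= C%:E)%E.
  apply: lime_le; first by apply: is_cvg_nneseries => i _ _; rewrite lee_fin.
  by apply: nearW => N; rewrite big_mkord sumEFin lee_fin.
split; first by rewrite -(fineK finE) -EFinM -/E.
split => //.
have dC k : dd k <= C.
  apply: le_trans (partC k.+1); rewrite big_ord_recr /= lerDr.
  by apply: sumr_ge0 => i _.
set M := Rb + C.
have M0 : 0 < M by rewrite /M; lra.
have hx k : enorm (x k.+1) <= M by apply: le_trans (ltW (hRb _)) _; rewrite /M; lra.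
have hxt k : enorm (xt k) <= M.
  have := @enormD R n (x k.+1) (xt k - x k.+1); rewrite (addrC (x k.+1)) subrK enormB.
  have := hx k; have := dC k; have := hRb k.+1; rewrite /dd /M; lra.
have [Lf [Lf0 hLf]] := @C1_lip R n f gradf hg gc M M0.
have [Lp [Lp0 hLp]] := @convex_lip R n phi cvx M M0.
have hpsi k : `|psi (x k.+1) - psi (xt k)| <= (Lf + Lp) * dd k.
  rewrite /psi (_ : _ - _ = (f (x k.+1) - f (xt k)) + (phi (x k.+1) - phi (xt k))); last by ring.
  apply: le_trans (ler_normD _ _) _.
  rewrite mulrDl; apply: lerD; [exact: hLf | exact: hLp].
apply: (@le_lt_trans _ _ (((Lf + Lp) * C)%:E)); last exact: ltry.
apply: le_trans (_ : (\sum_(k <oo) ((Lf + Lp)%:E * (dd k)%:E))%E <= _)%E.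
  apply: lee_nneseries => [i _ _|k _]; first by rewrite lee_fin.
  by rewrite -EFinM lee_fin hpsi.
rewrite nneseriesZl; last by move=> i _; rewrite lee_fin.
rewrite EFinM; apply: lee_wpmul2l => //.
by rewrite lee_fin addr_ge0.
Qed.
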